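(* Let $K$ be a knot and define $d_{-1}=[F,d_1]$ on $\mathcal{H}(K)$. Then $[E,d_{-1}]=d_1$ and $[F,d_{-1}]=0$, so $d_1,d_{-1}$ span a $2$-dimensional representation of $\mathfrak{sl}(2)$ (under the adjoint action). Furthermore $$d_{-1}^2=d_{-1}d_1+d_1d_{-1}=0.$$ The symmetry of $\mathcal{H}(K)$ exchanges $d_1$ with $d_{-1}$; in particular, $d_{-1}$ is a cancelling differential if $d_1$ is.
   Context: $\mathcal{H}(K)$ is the reduced triply graded (HOMFLY-PT) Khovanov–Rozansky homology of the knot $K$ over $\mathbb{C}$, finite-dimensional and graded by $(q,a,t)$. By Gorsky–Hogancamp–Mellit, $\mathcal{H}(K)$ carries an $\mathfrak{sl}(2)$ action $E,F,H$ with $[E,F]=H$, $[H,E]=2E$, $[H,F]=-2F$, $H=\tfrac12\deg_q$, $E$ raising $q$ by $4$, $F$ lowering it by $4$; it makes $\mathcal{H}(K)$ symmetric under an identification exchanging tridegrees $(q,a,t)$ and $(-q,a,t+2q)$ (the symmetry). $d_1$ is the first differential of Rasmussen's spectral sequence from $\mathcal{H}(K)$ to (one-dimensional) $\mathfrak{sl}(1)$ homology; $d_1^2=0$, $d_1$ changes degrees by $(q,a,t)\mapsto(q+2,a-2,t)$, and $[E,d_1]=0$. *)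

(* Defs.v *)
(* The knot homology H(K) is modelled as a finite-dimensional
   complex vector space C^n (C = R[i], R : realType) with a homogeneous basis;
   endomorphisms are n x n matrices acting on column vectors. *)
From mathcomp Require Import all_boot all_algebra.
From mathcomp Require Import reals complex.
Set Implicit Arguments. Unset Strict Implicit. Unset Printing Implicit Defensive.
Import GRing.Theory.
Local Open Scope ring_scope.

Definition comm {C : fieldType} {n : nat} (A B : 'M[C]_n) : 'M[C]_n :=
  A *m B - B *m A.

(* k-th power of a matrix (works also for n = 0) *)
Definition mxpow {C : fieldType} {n : nat} (A : 'M[C]_n) (k : nat) : 'M[C]_n :=
  iter k (mulmx A) 1%:M.

(* exponential of a matrix, truncated at degree n; this is the genuine
   exponential exp(A) whenever A is nilpotent (then A^n = 0), which is the
   case for E and F below. *)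
Definition expmx {C : fieldType} {n : nat} (A : 'M[C]_n) : 'M[C]_n :=
  \sum_(k < n.+1) (k`!%:R)^-1 *: mxpow A k.

(* The sl(2) Weyl element exp(E) exp(-F) exp(E), realizing the symmetry
   q <-> -q of H(K). *)
Definition weyl {C : fieldType} {n : nat} (E F : 'M[C]_n) : 'M[C]_n :=
  expmx E *m expmx (- F) *m expmx E.

(* dimension of the homology ker d / im d of d acting on column vectors *)
Definition homology_dim {C : fieldType} {n : nat} (d : 'M[C]_n) : nat :=
  (\rank (kermx d^T) - \rank d)%N.

Definition cancelling {C : fieldType} {n : nat} (d : 'M[C]_n) : Prop :=
  d *m d = 0 /\ homology_dim d = 1%N.

Definition qdeg {n : nat} (deg : 'I_n -> int * int * int) i : int := (deg i).1.1.
Definition adeg {n : nat} (deg : 'I_n -> int * int * int) i : int := (deg i).1.2.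
Definition tdeg {n : nat} (deg : 'I_n -> int * int * int) i : int := (deg i).2.

(* Main.v *)
Require Import Defs.

From mathcomp Require Import all_boot all_algebra.
From mathcomp Require Import reals complex zify.
From mathcomp.algebra_tactics Require Import ring.
Import GRing.Theory Num.Theory.
Local Open Scope ring_scope.
Set Implicit Arguments. Unset Strict Implicit.
Section S.
Variable C : fieldType.
Hypothesis hchar : forall k : nat, (k.+1%:R : C) != 0.
Variable n : nat.
Implicit Types A B X Y : 'M[C]_n.
Lemma mxpowE A k : mxpow A k = A ^+ k.
Proof. by elim: k => [|k IH] //=; rewrite IH exprS. Qed.
Lemma commE A B : comm A B = A * B - B * A.
Proof. by []. Qed.
Lemma jacobi A B X : comm A (comm B X) = comm (comm A B) X + comm B (comm A X).
Proof.
rewrite !commE !mulrBl !mulrBr !mulrA.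
set a := A * B * X; set b := A * X * B; set c := B * X * A; set d := X * B * A.
set e := B * A * X; set f := X * A * B.
rewrite !opprB !addrA.
by rewrite (addrAC _ (-f) e) (addrAC (a - e) d e) subrK (addrAC _ (-f) (-c)) subrK (addrAC a (-b) d) (addrAC (a+d) (-c) (-b)).
Qed.

Lemma commNr A X : comm A (- X) = - comm A X.
Proof. by rewrite !commE mulrN mulNr opprK opprB addrC. Qed.
Lemma commNl A X : comm (- A) X = - comm A X.
Proof. by rewrite !commE mulrN mulNr opprK opprB addrC. Qed.
Lemma commZr A a X : comm A (a *: X) = a *: comm A X.
Proof. by rewrite !commE scalerBr -!mulmxE -scalemxAl -scalemxAr. Qed.
Lemma comm0r A : comm A 0 = 0.
Proof. by rewrite commE mulr0 mul0r subrr. Qed.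

Lemma powX A X : A * comm A X = comm A X * A -> forall k,
  A ^+ k.+1 * X = X * A ^+ k.+1 + (comm A X * A ^+ k) *+ k.+1.
Proof.
set Y := comm A X => hY; elim => [|k IH].
  by rewrite expr1 expr0 mulr1 mulr1n /Y commE addrC subrK.
rewrite exprS -mulrA IH mulrDr mulrA mulrnAr (mulrA A Y) hY -(mulrA Y) -exprS.
have -> : A * X = X * A + Y by rewrite /Y commE addrC subrK.
by rewrite mulrDl (mulrS _ k.+1) addrA -exprS -mulrA -exprS.
Qed.

Lemma scal_fact (i : nat) (Z : 'M[C]_n) :
  ((i.+1)`!%:R^-1 : C) *: (Z *+ i.+1) = (i`!%:R^-1) *: Z.
Proof.
have e : Z *+ i.+1 = (i.+1%:R : C) *: Z by rewrite scaler_nat.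
by rewrite e scalerA factS natrM invfM mulrAC mulVf ?mul1r.
Qed.

Lemma expmxE A : expmx A = \sum_(k < n.+1) (k`!%:R^-1 : C) *: A ^+ k.
Proof. by apply: eq_bigr => k _; rewrite mxpowE. Qed.

Lemma sAl a A B : (a *: A) * B = a *: (A * B).
Proof. by rewrite -!mulmxE scalemxAl. Qed.
Lemma sAr a A B : A * (a *: B) = a *: (A * B).
Proof. by rewrite -!mulmxE scalemxAr. Qed.

Lemma expmx_conj A X : A ^+ n = 0 -> A * comm A X = comm A X * A ->
  expmx A * X = (X + comm A X) * expmx A.
Proof.
set Y := comm A X => hn hY.
have eY : Y * expmx A = \sum_(i < n) (i`!%:R^-1 : C) *: (Y * A ^+ i).
  rewrite expmxE big_ord_recr /= hn scaler0 addr0 mulr_sumr.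
  by apply: eq_bigr => i _; rewrite sAr.
rewrite mulrDl eY expmxE mulr_suml mulr_sumr big_ord_recl [X in _ = X + _]big_ord_recl /=.
rewrite !expr0 sAl sAr mul1r mulr1 fact0 invr1 !scale1r -addrA.
congr (_ + _); rewrite -big_split; apply: eq_bigr => i _.
rewrite /bump add1n sAl sAr powX // scalerDr scal_fact.
by [].
Qed.
Lemma expmx_unit A : A ^+ n = 0 -> expmx A \in unitmx.
Proof.
move=> hn.
set P := \sum_(i < n) ((i.+1)`!%:R^-1 : C) *: A ^+ i.
have eP : expmx A = 1 + A * P.
  rewrite expmxE big_ord_recl expr0 fact0 invr1 scale1r mulr_sumr; congr (_ + _).
  by apply: eq_bigr => i _; rewrite lift0 exprS sAr.
have cAP : GRing.comm A P.
  rewrite /GRing.comm mulr_sumr mulr_suml; apply: eq_bigr => i _.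
  by rewrite sAl sAr -exprS exprSr.
set N := A * P.
have hN : N ^+ n = 0 by rewrite /N exprMn_comm // hn mul0r.
have hS : (1 + N) * (\sum_(i < n) (- N) ^+ i) = 1.
  have := subrX1 (- N) n; rewrite exprNn hN mulr0 sub0r -opprD mulNr.
  by move/oppr_inj => h; rewrite addrC -h.
rewrite eP; have [] := mulmx1_unit hS; done.
Qed.
Variable q : 'I_n -> int.
Definition supp (X : 'M[C]_n) (s : int) := forall i j, X i j != 0 -> q i = q j + s.

Lemma sum_neq0 (F : 'I_n -> C) : \sum_l F l != 0 -> exists l, F l != 0.
Proof.
move=> h; case: (pickP (fun l => F l != 0)) => [l hl|none]; first by exists l.
by move: h; rewrite big1 ?eqxx // => l _; move: (none l) => /= /negbFE/eqP.
Qed.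

Lemma suppM A B a b : supp A a -> supp B b -> supp (A * B) (a + b).
Proof.
move=> hA hB i j; rewrite -mulmxE mxE => /sum_neq0 [l]; rewrite mulf_eq0 negb_or.
by case/andP => /hA -> /hB ->; rewrite -addrA [b + a]addrC.
Qed.

Lemma suppB X Y s : supp X s -> supp Y s -> supp (X - Y) s.
Proof.
move=> hX hY i j; rewrite !mxE; have [/hX //|/negPn/eqP x0] := boolP (X i j != 0).
by rewrite x0 sub0r oppr_eq0 => /hY.
Qed.

Lemma supp_comm A X a b : supp A a -> supp X b -> supp (comm A X) (a + b).
Proof.
move=> hA hX; rewrite commE; apply: suppB; first exact: suppM.
by rewrite addrC; exact: suppM.
Qed.

Lemma supp_opp X s : supp X s -> supp (- X) s.
Proof. by move=> h i j; rewrite mxE oppr_eq0 => /h. Qed.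

Lemma supp_large (c : int) : exists k : nat, forall X, supp X (c - 4 * k%:Z) -> X = 0.
Proof.
set B := (\max_i `|q i|)%N.
exists (`|c| + 2 * B + 1)%N => X hX; apply/matrixP => i j; rewrite mxE.
apply/eqP; apply/negP => /negP /hX.
have hi : (`|q i| <= B)%N by exact: leq_bigmax.
have hj : (`|q j| <= B)%N by exact: leq_bigmax.
lia.
Qed.
Lemma supp_nilp A s : s != 0 -> supp A s -> A ^+ n = 0.
Proof.
move=> hs hA.
have P : forall k i j, (A ^+ k) i j != 0 ->
    q i = q j + s * k%:Z /\ forall m, (m <= k)%N -> exists l, q l = q j + s * m%:Z.
  elim => [|k IH] i j.
    rewrite expr0 mxE; case: (eqVneq i j) => [-> _|ne]; last by rewrite mulr0n eqxx.
    split; first by rewrite mulr0 addr0.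
    by move=> m; rewrite leqn0 => /eqP ->; exists j; rewrite mulr0 addr0.
  rewrite exprS -mulmxE mxE => /sum_neq0 [l]; rewrite mulf_eq0 negb_or.
  case/andP => /hA hil /IH [hl hm].
  have e : q i = q j + s * k.+1%:Z.
    by rewrite hil hl -addrA -[k.+1]addn1 PoszD mulrDr mulr1.
  split=> // m; rewrite leq_eqVlt => /orP [/eqP ->|]; first by exists i.
  by rewrite ltnS; exact: hm.
apply/matrixP => i j; rewrite mxE; apply/eqP/negP => /negP /P [_ hm].
set s1 := [seq q j + s * m%:Z | m <- iota 0 n.+1].
have hu : uniq s1.
  rewrite map_inj_uniq ?iota_uniq // => a b /addrI /(mulfI hs) [].
  by [].
have hsub : {subset s1 <= [seq q l | l <- enum 'I_n]}.
  move=> x /mapP [m]; rewrite mem_iota add0n ltnS => /hm [l hl] ->.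
  by rewrite -hl map_f // mem_enum.
by have := uniq_leq_size hu hsub; rewrite !size_map size_iota -enumT size_enum_ord ltnn.
Qed.
Lemma commZl A a X : comm (a *: A) X = a *: comm A X.
Proof. by rewrite !commE scalerBr sAl sAr. Qed.

Lemma hw_zero E F H X : comm E F = H -> comm H F = - (2%:R *: F) ->
  comm E X = 0 -> comm H X = - (3%:R *: X) ->
  (exists m, iter m (comm F) X = 0) -> X = 0.
Proof.
move=> hEF hHF hEX hHX [m hm].
set u := fun k => iter k (comm F) X.
have inv : forall k, comm H (u k) = (- (2 * k + 3)%:R) *: u k /\
                     comm E (u k.+1) = (- (k.+1 * k.+3)%:R) *: u k.
  elim => [|k [IH1 IH2]].
    have h0 : comm H (u 0) = (- (2 * 0 + 3)%:R) *: u 0 by rewrite /= hHX scaleNr.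
    split => //; rewrite /= jacobi hEF hEX comm0r addr0 -/(u 0) h0.
    by [].
  have h1 : comm H (u k.+1) = (- (2 * k.+1 + 3)%:R) *: u k.+1.
    rewrite [u k.+1]/= jacobi hHF commNl commZl IH1 commZr -/(u k.+1).
    rewrite -scaleNr -scalerDl -opprD -natrD; congr (- _%:R *: _); lia.
  split => //; rewrite [u k.+2]/= jacobi hEF h1 IH2 commZr -/(u k.+1).
  rewrite -scalerDl -opprD -natrD; congr (- _%:R *: _); lia.
have step : forall k, u k.+1 = 0 -> u k = 0.
  move=> k hk; have := (inv k).2; rewrite hk comm0r => /esym/eqP.
  rewrite mulSn addSn scaler_eq0 oppr_eq0 (negbTE (hchar _)) /= => /eqP //.
elim: m hm => [//|m IH] hm; apply: IH; exact: step.
Qed.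
End S.

Theorem corollary3p29 (R : realType) (n : nat)
    (deg : 'I_n -> int * int * int)
    (E F H d1 : 'M[R[i]]_n)
    (* sl(2) relations *)
    (hEF : comm E F = H) (hHE : comm H E = 2%:R *: E) (hHF : comm H F = - (2%:R *: F))
    (* H = (1/2) deg_q *)
    (hH : H = diag_mx (\row_j ((qdeg deg j)%:~R / 2%:R)))
    (* E raises q by 4, F lowers q by 4 *)
    (hEdeg : forall i j, E i j != 0 -> qdeg deg i = qdeg deg j + 4)
    (hFdeg : forall i j, F i j != 0 -> qdeg deg i = qdeg deg j - 4)
    (* d1 has degree (2, -2, 0), d1^2 = 0, [E, d1] = 0 *)
    (hd1deg : forall i j, d1 i j != 0 ->
       [/\ qdeg deg i = qdeg deg j + 2, adeg deg i = adeg deg j - 2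
         & tdeg deg i = tdeg deg j])
    (hd1sq : d1 *m d1 = 0)
    (hEd1 : comm E d1 = 0) :
  let dm1 := comm F d1 in
  (* sl(2)-module structure of span(d1, d_{-1}) under the adjoint action *)
  [/\ comm E d1 = 0, comm H d1 = d1, comm E dm1 = d1, comm F dm1 = 0
     & comm H dm1 = - dm1] /\
  (* d_{-1}^2 = d_{-1} d1 + d1 d_{-1} = 0 *)
  (dm1 *m dm1 = 0 /\ dm1 *m d1 + d1 *m dm1 = 0) /\
  (* the symmetry (Weyl element) exchanges d1 and d_{-1} (up to sign) *)
  [/\ weyl E F \in unitmx,
      weyl E F *m d1 = - (dm1 *m weyl E F)
    & weyl E F *m dm1 = d1 *m weyl E F] /\
  (cancelling d1 -> cancelling dm1).
Proof.
move=> dm1.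
set q := qdeg deg.
have hch : forall k : nat, (k.+1%:R : R[i]) != 0 by move=> k; rewrite pnatr_eq0.
have sE : supp q E 4 by move=> i j /hEdeg.
have sF : supp q F (-4) by move=> i j /hFdeg.
have sd : supp q d1 2 by move=> i j /hd1deg [].
have hHd1 : comm H d1 = d1.
  apply/matrixP => i j; rewrite hH commE -!mulmxE mul_diag_mx mul_mx_diag !mxE.
  have [/sd e|/negPn/eqP ->] := boolP (d1 i j != 0); last by rewrite mulr0 mul0r subr0.
  rewrite -/q e intrD.
  by field.
have hEdm1 : comm E dm1 = d1.
  by rewrite /dm1 jacobi hEF hHd1 hEd1 comm0r addr0.
have hHdm1 : comm H dm1 = - dm1.
  by rewrite /dm1 jacobi hHF commNl commZl hHd1 -/dm1 scaler_nat mulr2n opprD subrK.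
set v2 := comm F dm1.
have hv2 : v2 = 0.
  apply: (hw_zero hch hEF hHF).
  - by rewrite /v2 jacobi hEF hHdm1 hEdm1 addNr.
  - rewrite /v2 jacobi hHF commNl commZl hHdm1 commNr -/v2 -opprD.
    by rewrite !scaler_nat mulrSr mulr1n -mulr2n -mulrSr.
  have [k hk] := @supp_large R[i] n q (-6).
  exists k; apply: hk.
  have hs2 : supp q v2 (-6) by have := supp_comm sF (supp_comm sF sd); rewrite /v2 /dm1.
  elim: k => [|k IH]; first by rewrite mulr0 subr0.
  have := supp_comm sF IH; rewrite [iter k.+1 _ _]/=.
  have -> : (-4 + (-6 - 4 * k%:Z)) = (-6 - 4 * k.+1%:Z) by lia.
  by [].
have nE : E ^+ n = 0 by apply: (supp_nilp _ sE).
have nF : (- F) ^+ n = 0 by rewrite exprNn (supp_nilp _ sF) // mulr0.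
have cEd1 : E * d1 = d1 * E by apply/eqP; rewrite -subr_eq0 -commE hEd1.
have cFdm1 : F * dm1 = dm1 * F by apply/eqP; rewrite -subr_eq0 -commE -/v2 hv2.
have h1 : E * comm E d1 = comm E d1 * E by rewrite hEd1 mulr0 mul0r.
have c1 := expmx_conj hch nE h1; rewrite hEd1 addr0 in c1.
have h2 : E * comm E dm1 = comm E dm1 * E by rewrite hEdm1.
have c2 := expmx_conj hch nE h2; rewrite hEdm1 in c2.
have e3 : comm (- F) d1 = - dm1 by rewrite commNl.
have h3 : (- F) * comm (- F) d1 = comm (- F) d1 * (- F).
  by rewrite e3 !mulrNN cFdm1.
have c3 := expmx_conj hch nF h3; rewrite e3 in c3.
have e4 : comm (- F) dm1 = 0 by rewrite commNl -/v2 hv2 oppr0.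
have h4 : (- F) * comm (- F) dm1 = comm (- F) dm1 * (- F).
  by rewrite e4 mulr0 mul0r.
have c4 := expmx_conj hch nF h4; rewrite e4 addr0 in c4.
have c1' : expmx E *m d1 = d1 *m expmx E := c1.
have c2' : expmx E *m dm1 = (dm1 + d1) *m expmx E := c2.
have c3' : expmx (- F) *m d1 = (d1 - dm1) *m expmx (- F) := c3.
have c4' : expmx (- F) *m dm1 = dm1 *m expmx (- F) := c4.
have [W1 W2] : weyl E F *m d1 = - (dm1 *m weyl E F) /\ weyl E F *m dm1 = d1 *m weyl E F.
  rewrite /weyl; move: c1' c2' c3' c4'; move: (expmx E) (expmx (- F)) => a b k1 k2 k3 k4.
  split.
    rewrite -!mulmxA k1 !mulmxA -(mulmxA a b d1) k3 (mulmxA a (d1 - dm1) b) mulmxBr k1 k2.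
    rewrite -mulmxBl.
    have -> : d1 - (dm1 + d1) = - dm1 by rewrite opprD addrCA subrr addr0.
    by rewrite !mulNmx.
  rewrite -!mulmxA k2 (mulmxA b (dm1 + d1) a) mulmxDr k4 k3 -mulmxDl.
  have -> : dm1 + (d1 - dm1) = d1 by rewrite addrC subrK.
  by rewrite !mulmxA k1.
have hw : weyl E F \in unitmx.
  by rewrite /weyl !unitmx_mul !expmx_unit.
have W1' : dm1 *m weyl E F = - (weyl E F *m d1) by rewrite W1 opprK.
have sq : dm1 *m dm1 = 0.
  have h : dm1 *m dm1 *m weyl E F = 0.
    by rewrite -mulmxA W1' mulmxN mulmxA W1' mulNmx opprK -mulmxA hd1sq mulmx0.
  by rewrite -(mulmxK hw (dm1 *m dm1)) h mul0mx.
have ac : dm1 *m d1 + d1 *m dm1 = 0.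
  have hd1sq' : d1 * d1 = 0 := hd1sq.
  have : dm1 * d1 + d1 * dm1 = 0.
    rewrite /dm1 commE mulrBl mulrBr -!mulrA hd1sq' mulr0 sub0r !mulrA hd1sq' mul0r subr0.
    by rewrite addNr.
  by [].
have hr : \rank dm1 = \rank d1.
  have e : dm1 = - (weyl E F *m d1 *m invmx (weyl E F)).
    by rewrite -mulNmx -W1' mulmxK.
  rewrite e (eqmx_opp _) -mulmxA eqmxMfull ?row_full_unit //.
  by rewrite mxrankMfree // row_free_unit unitmx_inv.
split; first by [].
split; first by [].
split; first by [].
case=> _ hh; split => //; move: hh.
by rewrite /homology_dim !mxrank_ker !mxrank_tr hr.
Qed.
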